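(* For $n,m\ge 0$ let $f(n,m)$ be the number of linked cycles $\hat\pi$ on $[n]$ with exactly $m$ singly covered minimal elements. Then $f(1,1)=1$, $f(n,0)=0$ for $n\ge1$, $f(n,m)=0$ if $n<m$, and for all $n\ge2$, $m\ge1$, $$f(n,m)=(2(n-1)-m)f(n-1,m)+f(n-1,m-1).$$
   Context: Two finite sets of integers $E,F$ are nearly disjoint if for every $i\in E\cap F$ either ($i=\min(E)$, $|E|>1$, $i\ne\min(F)$) or ($i=\min(F)$, $|F|>1$, $i\ne\min(E)$). A linked partition of $[n]$ is a set of nonempty subsets (blocks) of $[n]$ with union $[n]$, any two distinct blocks nearly disjoint; each element lies in one or two blocks (singly/doubly covered). A singly covered minimal element is a singly covered element that is the minimum of its block. A linked cycle on $[n]$ is a linked partition of $[n]$ together with a cyclic arrangement of the elements of each block (two linked cycles differ if the partitions or some cyclic arrangement differ). *)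

(* Defs.v *)
From mathcomp Require Import all_boot all_order all_fingroup.
From mathcomp Require Import all_algebra.
Set Implicit Arguments. Unset Strict Implicit. Unset Printing Implicit Defensive.

(* [n] = {1,...,n} is represented by 'I_n = {0,...,n-1} (shift by one; all
   notions below only depend on the order, which the shift preserves). *)

Section LinkedCycles.
Variable n : nat.
Local Notation T := 'I_n.

Definition is_min (i : T) (E : {set T}) : bool :=
  (i \in E) && [forall j in E, i <= j].

Definition nearly_disjoint (E F : {set T}) : bool :=
  [forall i in E :&: F,
     (is_min i E && (1 < #|E|) && ~~ is_min i F) ||
     (is_min i F && (1 < #|F|) && ~~ is_min i E)].

Definition linked_partition (P : {set {set T}}) : bool :=
  [&& set0 \notin P, cover P == [set: T] &
      [forall E in P, forall F in P, (E != F) ==> nearly_disjoint E F]].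

Definition cyclic_arrangement (B : {set T}) (c : {perm T}) : bool :=
  perm_on B c && [forall x in B, porbit c x == B].

Definition blocks (L : {set ({set T} * {perm T})}) : {set {set T}} :=
  [set p.1 | p in L].

(* A linked cycle: a linked partition together with a cyclic arrangement
   of each block, encoded as the set of pairs (block, arrangement). *)
Definition linked_cycle (L : {set ({set T} * {perm T})}) : bool :=
  [&& linked_partition (blocks L),
      [forall p in L, cyclic_arrangement p.1 p.2] &
      [forall p in L, forall q in L, (p.1 == q.1) ==> (p == q)]].

Definition singly_covered (P : {set {set T}}) (x : T) : bool :=
  #|[set B in P | x \in B]| == 1.

Definition sc_min_elements (P : {set {set T}}) : {set T} :=
  [set x | singly_covered P x && [exists B in P, is_min x B]].

End LinkedCycles.

Definition f (n m : nat) : nat :=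
  #|[set L : {set ({set 'I_n} * {perm 'I_n})} |
      linked_cycle L && (#|sc_min_elements (blocks L)| == m)]|.

(* Main.v *)
Require Import Defs.
From mathcomp Require Import all_boot all_order all_fingroup all_algebra.
From mathcomp Require Import zify.
Set Implicit Arguments. Unset Strict Implicit. Unset Printing Implicit Defensive.

Section Perms.
Variable T : finType.
Implicit Types (B : {set T}) (c : {perm T}).

Lemma perm_onS B B' c : B \subset B' -> perm_on B c -> perm_on B' c.
Proof. by move=> sB pc; apply: subset_trans sB. Qed.

Lemma porbit_closed B c x : perm_on B c -> x \in B -> porbit c x \subset B.
Proof.
move=> pc xB; apply/subsetP => y /porbitP [i ->].
elim: i => [|i IH]; first by rewrite expg0 perm1.
by rewrite expgSr permM (perm_closed _ pc).
Qed.

Lemma porbit_fix c x : c x = x -> porbit c x = [set x].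
Proof.
move=> cx; apply/setP => y; rewrite inE; apply/porbitP/eqP => [[i ->]|->].
  by rewrite permX_fix.
by exists 0; rewrite expg0 perm1.
Qed.

Definition cycB B c := perm_on B c && [forall x in B, porbit c x == B].

Lemma cycB_card B c : B != set0 ->
  cycB B c = perm_on B c && (#|porbits c| == #|~: B| + 1).
Proof.
move=> /set0Pn [x0 x0B]; rewrite /cycB; case pc: (perm_on B c) => //=.
have split : porbits c = (porbit c @: B) :|: (porbit c @: ~: B).
  apply/setP => O; rewrite /porbits -imsetU setUCr.
  by apply/imsetP/imsetP => -[x _ ->]; exists x.
have disj : (porbit c @: B) :&: (porbit c @: ~: B) = set0.
  apply/setP => O; rewrite !inE; apply/negbTE/andP.
  move=> -[/imsetP [x xB ->] /imsetP [y yB /esym]].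
  rewrite inE in yB.
  rewrite porbit_fix ?(out_perm pc) // => E.
  have : y \in porbit c x by rewrite -E inE.
  by move/(subsetP (porbit_closed pc xB)); rewrite (negbTE yB).
have cardC : #|porbit c @: ~: B| = #|~: B|.
  apply: card_in_imset => y z; rewrite !inE => yB zB.
  rewrite !porbit_fix ?(out_perm pc) // => /setP /(_ y); rewrite !inE eqxx.
  by move/esym/eqP.
have -> : #|porbits c| = #|porbit c @: B| + #|~: B|.
  by rewrite split cardsU disj cards0 subn0 cardC.
rewrite [_ + 1]addnC eqn_add2r.
apply/forall_inP/cards1P => [H|[O HO] x xB].
  exists B; apply/setP => O; rewrite inE; apply/imsetP/eqP => [[x xB ->]|->].
    exact/eqP/H.
  by exists x0 => //; apply/esym/eqP/H.
have Ox : porbit c x = O by apply/set1P; rewrite -HO imset_f.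
have Ox0 : porbit c x0 = O by apply/set1P; rewrite -HO imset_f.
rewrite Ox eqEsubset -{1}Ox0 porbit_closed //=.
by apply/subsetP => y yB; rewrite -(_ : porbit c y = O) ?porbit_id //;
   apply/set1P; rewrite -HO imset_f.
Qed.

Lemma cycB_orbit B c x : cycB B c -> x \in B -> porbit c x = B.
Proof. by case/andP => _ /forall_inP H xB; apply/eqP/H. Qed.

Lemma cycB_ins B c x b : cycB B c -> x \in B -> b \notin B ->
  cycB (b |: B) (tperm b x * c).
Proof.
move=> cB xB bB.
have B0 : B != set0 by apply/set0Pn; exists x.
have B10 : b |: B != set0 by apply/set0Pn; exists b; rewrite setU11.
move: (cB); rewrite !cycB_card // => /andP [pc /eqP cnt].
apply/andP; split.
  apply: perm_onM; first by apply: perm_onS (tperm_on b x); rewrite setUS ?sub1set.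
  by apply: perm_onS pc; apply: subsetUr.
have := porbits_mul_tperm c b x.
rewrite (cycB_orbit cB xB) bB /=.
have -> : (b != x) by apply: contraNneq bB => ->.
rewrite cnt.
have := cardsD1 b (~: B); rewrite inE bB /= => ->.
have -> : ~: (b |: B) = ~: B :\ b.
  by apply/setP => z; rewrite !inE; case: (z == b).
rewrite (_ : 1.*2 = 2) // => H; apply/eqP.
rewrite /= in H. lia.
Qed.

Lemma cycB_rem B c b : cycB B c -> b \in B -> 1 < #|B| ->
  cycB (B :\ b) (tperm b ((c^-1)%g b) * c).
Proof.
move=> cB bB B1.
set x := (c^-1)%g b.
move: (cB); rewrite cycB_card; last by apply/set0Pn; exists b.
move=> /andP [pc /eqP cnt].
have xB : x \in B by rewrite -(perm_closed _ pc) /x permKV.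
have xb : x != b.
  apply/eqP => E.
  have cb : c b = b by rewrite -{1}E /x permKV.
  move: (cycB_orbit cB bB); rewrite porbit_fix // => EB.
  by move: B1; rewrite -EB cards1.
set c' := (tperm b x * c)%g.
have c'b : c' b = b by rewrite permM tpermL /x permKV.
have pc' : perm_on (B :\ b) c'.
  apply/subsetP => z; rewrite inE => nz.
  have zb : z != b by apply: contraNneq nz => ->; rewrite c'b.
  rewrite !inE zb /=.
  have [->|zx] := eqVneq z x; first exact: xB.
  move: nz; rewrite /c' permM tpermD 1?eq_sym // => nz; apply: contraR nz => zB; apply/eqP; apply/esym; exact: out_perm pc zB.
have B0 : B :\ b != set0 by apply/set0Pn; exists x; rewrite !inE xb.
rewrite cycB_card // pc' /=.
have := porbits_mul_tperm c' b x; rewrite /=.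
have -> : (tperm b x * c')%g = c by rewrite /c' mulgA tperm2 mul1g.
rewrite porbit_sym porbit_fix // inE xb eq_sym xb /=.
rewrite cnt (_ : 1.*2 = 2) // => H2.
have -> : ~: (B :\ b) = b |: ~: B.
  by apply/setP => z; rewrite !inE; case: (z == b).
rewrite cardsU1 inE bB /=; apply/eqP. rewrite /= in H2. lia.
Qed.

Lemma cycB1 x : cycB [set x] 1.
Proof.
apply/andP; split; first exact: perm_on1.
by apply/forall_inP => y /set1P ->; rewrite porbit_fix ?perm1.
Qed.
End Perms.


Section LP.
Variable N : nat.
Local Notation T := 'I_N.
Implicit Types (E F : {set T}) (P : {set {set T}}) (L : {set ({set T} * {perm T})}).

Lemma coverP P x : reflect (exists2 B, B \in P & x \in B) (x \in cover P).
Proof. exact: bigcupP. Qed.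

Lemma is_minP i E : reflect (i \in E /\ forall j, j \in E -> i <= j) (is_min i E).
Proof.
apply: (iffP andP) => [[iE /forall_inP H]|[iE H]]; split => //.
by apply/forall_inP.
Qed.

Lemma is_min_mem i E : is_min i E -> i \in E.
Proof. by case/is_minP. Qed.

Lemma is_min_uniq i j E : is_min i E -> is_min j E -> i = j.
Proof.
move=> /is_minP [iE Hi] /is_minP [jE Hj]; apply: val_inj; apply/eqP.
by rewrite eqn_leq Hi ?Hj.
Qed.

Lemma ex_min E : E != set0 -> exists i, is_min i E.
Proof.
case/set0Pn => i0 i0E.
case: (arg_minnP (fun i : T => val i) i0E) => i iE Hi.
by exists i; apply/is_minP; split.
Qed.

Lemma ndP E F : reflect (forall i, i \in E -> i \in F ->
   (is_min i E && (1 < #|E|) && ~~ is_min i F) ||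
   (is_min i F && (1 < #|F|) && ~~ is_min i E)) (nearly_disjoint E F).
Proof.
apply: (iffP forall_inP) => H i.
  by move=> iE iF; apply: H; rewrite inE iE.
by rewrite inE => /andP [iE iF]; apply: H.
Qed.

Lemma nd_sym E F : nearly_disjoint E F = nearly_disjoint F E.
Proof.
by apply/ndP/ndP => H i iE iF; rewrite orbC; apply: H.
Qed.

Lemma nd_min E F i : nearly_disjoint E F -> i \in E -> i \in F ->
  is_min i F = ~~ is_min i E.
Proof.
move=> /ndP H iE iF; move: (H i iE iF).
by case: (is_min i E); case: (is_min i F); rewrite ?andbF ?andbT.
Qed.

Lemma nd_card E F i : nearly_disjoint E F -> i \in E -> i \in F ->
  is_min i E -> 1 < #|E|.
Proof.
move=> /ndP H iE iF mE; move: (H i iE iF); rewrite mE /=.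
by case: (1 < #|E|) => //=; rewrite andbF.
Qed.

Definition pw_nd P := forall E F, E \in P -> F \in P -> E != F ->
  nearly_disjoint E F.

Definition lp_on (D : {set T}) P := [&& set0 \notin P, cover P == D &
      [forall E in P, forall F in P, (E != F) ==> nearly_disjoint E F]].

Definition lc_on (D : {set T}) L := [&& lp_on D (blocks L),
      [forall p in L, cyclic_arrangement p.1 p.2] &
      [forall p in L, forall q in L, (p.1 == q.1) ==> (p == q)]].

Lemma lc_onT L : linked_cycle L = lc_on [set: T] L.
Proof. by []. Qed.

Lemma lc_onP D L : reflect
  [/\ set0 \notin blocks L, cover (blocks L) = D, pw_nd (blocks L),
      (forall p, p \in L -> cycB p.1 p.2) &
      (forall p q, p \in L -> q \in L -> p.1 = q.1 -> p = q)] (lc_on D L).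
Proof.
apply: (iffP idP).
  case/and3P => /and3P [H0 /eqP H1 /forall_inP H2] /forall_inP H3 /forall_inP H4.
  split => //.
  - by move=> E F EP FP; move/forall_inP: (H2 E EP) => /(_ F FP) /implyP.
  - by move=> p q pL qL e; move/forall_inP: (H4 p pL) => /(_ q qL) /implyP;
       rewrite e eqxx => /(_ isT) /eqP.
case=> H0 H1 H2 H3 H4; apply/and3P; split.
- apply/and3P; split => //; first by rewrite H1.
  apply/forall_inP => E EP; apply/forall_inP => F FP; apply/implyP.
  exact: H2.
- by apply/forall_inP.
- apply/forall_inP => p pL; apply/forall_inP => q qL; apply/implyP => /eqP e.
  by rewrite (H4 p q).
Qed.

Lemma blocksP L E : reflect (exists2 p, p \in L & E = p.1) (E \in blocks L).
Proof. exact: imsetP. Qed.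

Lemma blocks_f L p : p \in L -> p.1 \in blocks L.
Proof. by move=> pL; apply/imsetP; exists p. Qed.

Lemma blocksU1 L p : blocks (p |: L) = p.1 |: blocks L.
Proof. by rewrite /blocks imsetU1. Qed.

Lemma blocksD1 L p : p \in L ->
  (forall q, q \in L -> q.1 = p.1 -> q = p) ->
  blocks (L :\ p) = blocks L :\ p.1.
Proof.
move=> pL H; apply/setP => E; rewrite !inE.
apply/imsetP/andP => [[q /setD1P [qp qL] ->]|[Ep /imsetP [q qL e]]].
  split; last by apply/imsetP; exists q.
  by apply: contra qp => /eqP /H ->.
by exists q => //; rewrite !inE qL andbT; apply: contraNneq Ep => <-; rewrite e.
Qed.

Lemma card_cov_U1 P E y : E \notin P ->
  #|[set B in E |: P | y \in B]| = (y \in E) + #|[set B in P | y \in B]|.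
Proof.
move=> EP; case yE: (y \in E).
  have -> : [set B in E |: P | y \in B] = E |: [set B in P | y \in B].
    by apply/setP => B; rewrite !inE; case: eqP => [->|]; rewrite ?yE.
  by rewrite cardsU1 inE (negbTE EP).
rewrite add0n; apply: eq_card => B; rewrite !inE.
by case: eqP => [->|]; rewrite ?yE ?andbF.  
Qed.

Lemma sc_minE P y : (y \in sc_min_elements P) =
  (#|[set B in P | y \in B]| == 1) && [exists B in P, is_min y B].
Proof. by rewrite inE. Qed.

Lemma sc_min_U1 P E y : E \notin P -> (y \in sc_min_elements (E |: P)) =
  ((y \in E) + #|[set B in P | y \in B]| == 1) &&
  (is_min y E || [exists B in P, is_min y B]).
Proof.
move=> EP; rewrite sc_minE card_cov_U1 //; congr (_ && _).
apply/exists_inP/orP => [[B /setU1P [->|BP] mB]|[mE|/exists_inP [B BP mB]]].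
- by left.
- by right; apply/exists_inP; exists B.
- by exists E; rewrite ?setU11.
- by exists B; rewrite ?setU1r.
Qed.

Lemma sc_min_swap P E E' y : E \notin P -> E' \notin P ->
  (y \in E) = (y \in E') -> is_min y E = is_min y E' ->
  (y \in sc_min_elements (E |: P)) = (y \in sc_min_elements (E' |: P)).
Proof. by move=> EP E'P e1 e2; rewrite !sc_min_U1 // e1 e2. Qed.


Lemma cover_U1 E P : cover (E |: P) = E :|: cover P.
Proof.
apply/setP => y; rewrite inE; apply/coverP/orP.
  by case=> B /setU1P [->|BP] yB; [left|right; apply/coverP; exists B].
case=> [yE|/coverP [B BP yB]]; first by exists E; rewrite ?setU11.
by exists B; rewrite ?setU1r.
Qed.

Lemma lc_blocksD1 D L p : lc_on D L -> p \in L ->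
  blocks (L :\ p) = blocks L :\ p.1.
Proof.
case/lc_onP => _ _ _ _ H4 pL; apply: blocksD1 => // q qL e.
exact: H4.
Qed.

Lemma lc_on_D1 D L p : lc_on D L -> p \in L ->
  lc_on (cover (blocks L :\ p.1)) (L :\ p).
Proof.
move=> lc pL; rewrite -(lc_blocksD1 lc pL).
case/lc_onP: lc => H0 H1 H2 H3 H4; apply/lc_onP; split => //.
- apply: contra H0 => /blocksP [q /setD1P [_ qL] ->].
  exact: blocks_f.
- move=> E F /blocksP [q /setD1P [_ qL] ->] /blocksP [r /setD1P [_ rL] ->].
  by apply: H2; apply: blocks_f.
- by move=> q /setD1P [_ qL]; apply: H3.
- by move=> q r /setD1P [_ qL] /setD1P [_ rL]; apply: H4.
Qed.

Lemma lc_on_U1 D L p : lc_on D L -> p.1 \notin blocks L -> p.1 != set0 ->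
  cycB p.1 p.2 -> (forall F, F \in blocks L -> nearly_disjoint p.1 F) ->
  lc_on (p.1 :|: D) (p |: L).
Proof.
move=> lc pP p0 cp ndp; case/lc_onP: lc => H0 H1 H2 H3 H4.
apply/lc_onP; split.
- by rewrite blocksU1 !inE negb_or eq_sym p0.
- by rewrite blocksU1 cover_U1 H1.
- move=> E F; rewrite blocksU1 => /setU1P [->|EP] /setU1P [->|FP] EF.
  + by rewrite eqxx in EF.
  + exact: ndp.
  + by rewrite nd_sym; apply: ndp.
  + exact: H2.
- by move=> q /setU1P [->|qL]; [|apply: H3].
- move=> q r /setU1P [->|qL] /setU1P [->|rL] e //.
  + by move: pP; rewrite e (blocks_f rL).
  + by move: pP; rewrite -e (blocks_f qL).
  + exact: H4.
Qed.

End LP.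


Lemma pick_uniq (T : finType) (P : pred T) a :
  P a -> (forall b, P b -> b = a) -> [pick x | P x] = Some a.
Proof.
move=> Pa H; case: pickP => [b Pb|/(_ a)]; last by rewrite Pa.
by rewrite (H b Pb).
Qed.

Section Main.
Variable n : nat.
Local Notation T := 'I_n.+1.
Local Notation PT := ({set T} * {perm T})%type.
Local Notation top := (@ord_max n).
Implicit Types (E F : {set T}) (P : {set {set T}}) (L : {set PT}).

Definition D : {set T} := [set~ top].

Lemma le_top (i : T) : i <= top.
Proof. exact: leq_ord. Qed.

Lemma is_min_U1top E i : i != top -> is_min i (top |: E) = is_min i E.
Proof.
move=> it; apply/is_minP/is_minP => -[iE H]; split.
- by move: iE; rewrite !inE (negbTE it).
- by move=> j jE; apply: H; rewrite !inE jE orbT.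
- by rewrite !inE iE orbT.
- by move=> j /setU1P [->|]; [apply: le_top | apply: H].
Qed.

Lemma is_min_D1top E i : i != top -> is_min i (E :\ top) = is_min i E.
Proof.
move=> it; case tE: (top \in E).
  by rewrite -{2}(setD1K tE) is_min_U1top.
by rewrite (setDidPl _) // disjoint_sym disjoints1 tE.
Qed.

Lemma not_min_top E x : x \in E -> x != top -> ~~ is_min top E.
Proof.
move=> xE xt; apply/negP => /is_minP [_ /(_ x xE) H].
by move/eqP: xt; apply; apply: val_inj; apply/eqP; rewrite eqn_leq H le_top.
Qed.

Lemma min_card_top E : is_min top E -> 1 < #|E| -> False.
Proof.
move=> mt /card_gt1P [x [y [xE yE xy]]].
have [xt|xt] := eqVneq x top.
  by move: mt; rewrite (negbTE (not_min_top yE _)) //; rewrite -xt eq_sym.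
by move: mt; rewrite (negbTE (not_min_top xE xt)).
Qed.

Lemma top_sc_min P : top \notin cover P -> top \notin sc_min_elements P.
Proof.
move=> tP; rewrite sc_minE; apply/nandP; left.
suff -> : [set B in P | top \in B] = set0 by rewrite cards0.
apply/setP => B; rewrite !inE; apply/negbTE/andP => -[BP tB].
by move/negP: tP; apply; apply/coverP; exists B.
Qed.

Lemma top_sc_min_U1 P E x : top \notin cover P -> E \notin P -> x \in E ->
  x != top -> top \notin sc_min_elements (E |: P).
Proof.
move=> tP EP xE xt; rewrite sc_min_U1 //; apply/nandP; right.
rewrite negb_or (not_min_top xE xt) /=; apply/exists_inP => -[B BP mB].
by move/negP: tP; apply; apply/coverP; exists B => //; apply: is_min_mem.
Qed.


Lemma nd_addtop E F : top \notin F -> nearly_disjoint E F ->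
  nearly_disjoint (top |: E) F.
Proof.
move=> tF /ndP H; apply/ndP => i /setU1P [-> /(negP tF)//|iE] iF.
have it : i != top by apply: contraNneq tF => <-.
rewrite is_min_U1top //.
have : #|E| <= #|top |: E| by apply: subset_leq_card; apply: subsetUr.
move=> le; case/orP: (H i iE iF) => /andP [/andP [a b] c]; apply/orP; [left|right].
  by rewrite a c (leq_trans b le).
by rewrite a b c.
Qed.

Lemma lcD_top L p : lc_on D L -> p \in L -> top \notin p.1.
Proof.
case/lc_onP => _ H1 _ _ _ pL; apply/negP => tp.
have : top \in cover (blocks L) by apply/coverP; exists p.1 => //; apply: blocks_f.
by rewrite H1 !inE eqxx.
Qed.

Lemma lcD_cov L x : lc_on D L -> x != top -> exists2 p, p \in L & x \in p.1.
Proof.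
case/lc_onP => _ H1 _ _ _ xt.
have : x \in cover (blocks L) by rewrite H1 !inE.
by case/coverP => B /blocksP [p pL ->] xp; exists p.
Qed.

Lemma cov_gt0 P E y : E \in P -> y \in E -> 0 < #|[set B in P | y \in B]|.
Proof. by move=> EP yE; apply/card_gt0P; exists E; rewrite inE EP. Qed.

Definition ins L (x : T) (b : bool) : {set PT} :=
  if [pick p in L | (x \in p.1) && (is_min x p.1 == b)] is Some p
  then (top |: p.1, (tperm top x * p.2)%g) |: (L :\ p)
  else (top |: [set x], tperm top x) |: L.

Lemma ins_ok L x b : lc_on D L -> x != top ->
  (b || (x \notin sc_min_elements (blocks L))) ->
  [/\ lc_on [set: T] (ins L x b),
      sc_min_elements (blocks (ins L x b)) = sc_min_elements (blocks L) &
      ([set top], 1%g) \notin ins L x b].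
Proof.
move=> lc xt valid; rewrite /ins.
case: pickP => [p /andP [pL /andP [xp /eqP mxp]] | nop].
  set E := p.1; set c := p.2.
  have tE := lcD_top lc pL.
  have lc1 := lc_on_D1 lc pL.
  have bD := lc_blocksD1 lc pL.
  have E'P : top |: E \notin blocks (L :\ p).
    apply/negP => /blocksP [q /setD1P [_ qL] e].
    by move: (lcD_top lc qL); rewrite -e setU11.
  have EP : E \in blocks L by apply: blocks_f.
  split.
  - have := lc_on_U1 (p := (top |: E, (tperm top x * c)%g)) lc1 E'P.
    rewrite (_ : (top |: E) :|: cover (blocks L :\ p.1) = [set: T]); last first.
      apply/setP => y; rewrite !inE.
      have [->|yt] := eqVneq y top; first by [].
      have [q qL yq] := lcD_cov lc yt.
      have [e|ne] := eqVneq q.1 E; first by rewrite -e yq.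
      apply/orP; right; apply/coverP; exists q.1 => //; by rewrite !inE ne (blocks_f qL).
    apply => //=.
    + by apply/set0Pn; exists top; rewrite setU11.
    + apply: cycB_ins => //; case/lc_onP: lc => _ _ _ H3 _; exact: H3.
    + move=> F; rewrite bD => /setD1P [FE FP]; apply: nd_addtop.
        by case/blocksP: FP => q qL ->; apply: lcD_top lc qL.
      by case/lc_onP: lc => _ _ H2 _ _; apply: H2; rewrite // eq_sym.
  - rewrite blocksU1 bD /=; rewrite -{2}(setD1K EP).
    have EnP : E \notin blocks L :\ E by rewrite !inE eqxx.
    rewrite bD in E'P.
    have tC : top \notin cover (blocks L :\ E).
      apply/negP => /coverP [B /setD1P [_ /blocksP [q qL ->]] tq].
      by move: (lcD_top lc qL); rewrite tq.
    apply/setP => y; have [->|yt] := eqVneq y top.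
      rewrite (negbTE (top_sc_min_U1 tC E'P _ xt)); last by rewrite !inE xp orbT.
      by rewrite (negbTE (top_sc_min_U1 tC EnP xp xt)).
    apply: sc_min_swap => //; first by rewrite !inE (negbTE yt).
    by rewrite is_min_U1top.
  - rewrite !inE negb_or; apply/andP; split.
      by apply/negP => /eqP [] /setP /(_ x); rewrite !inE xp orbT (negbTE xt).
    apply/negP => /andP [_ tL].
    by move: (lcD_top lc tL); rewrite /= inE eqxx.
have bT : b.
  case: b valid nop => //= xsc nop.
  have [q qL xq] := lcD_cov lc xt.
  move: xsc; rewrite sc_minE negb_and; case/orP; last first.
    move/negP; case; apply/exists_inP; exists q.1; first exact: blocks_f.
    by move: (nop q) => /=; rewrite qL xq /=; case: (is_min x q.1).
  rewrite neq_ltn ltnNge (cov_gt0 (blocks_f qL) xq) /=.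
  case/card_gt1P => E1 [E2 []]; rewrite !inE => /andP [/blocksP [q1 q1L ->] x1]
     /andP [/blocksP [q2 q2L ->] x2] ne.
  case/lc_onP: lc => _ _ H2 _ _.
  have := nd_min (H2 _ _ (blocks_f q1L) (blocks_f q2L) ne) x1 x2.
  move: (nop q1) (nop q2) => /=; rewrite q1L q2L x1 x2 /=.
  by case: (is_min x q1.1); case: (is_min x q2.1).
rewrite {}bT in valid nop |- *.
have nomin : forall B, B \in blocks L -> x \in B -> ~~ is_min x B.
  move=> B /blocksP [q qL ->] xq; move: (nop q) => /=.
  by rewrite qL xq /=; case: (is_min x q.1).
have E'P : top |: [set x] \notin blocks L.
  apply/negP => /blocksP [q qL e].
  by move: (lcD_top lc qL); rewrite -e setU11.
have mx : is_min x (top |: [set x]).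
  by rewrite is_min_U1top //; apply/is_minP; split; [rewrite inE|move=> j /set1P ->].
have cx : 1 < #|top |: [set x]|.
  by rewrite cardsU1 cards1 inE eq_sym (negbTE xt).
split.
- have := lc_on_U1 (p := (top |: [set x], tperm top x)) lc E'P.
  rewrite (_ : (top |: [set x]) :|: D = [set: T]); last first.
    by apply/setP => y; rewrite !inE; case: (y == top); rewrite ?orbT.
  apply => //=.
  + by apply/set0Pn; exists top; rewrite setU11.
  + rewrite -[tperm top x]mulg1; apply: cycB_ins; first exact: cycB1.
      by rewrite inE.
    by rewrite inE eq_sym.
  + move=> F FP; apply/ndP => i /setU1P [->|/set1P ->] iF.
      by case/blocksP: FP iF => q qL -> tq; move: (lcD_top lc qL); rewrite tq.
    by rewrite mx cx (nomin F FP iF).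
- apply/setP => y; rewrite blocksU1.
  have [->|yt] := eqVneq y top.
    rewrite (negbTE (top_sc_min_U1 _ E'P _ xt)); last by rewrite !inE eqxx orbT.
      by rewrite (negbTE (top_sc_min _)) //; case/lc_onP: lc => _ -> _ _ _; rewrite !inE eqxx.
    by case/lc_onP: lc => _ -> _ _ _; rewrite !inE eqxx.
  rewrite sc_min_U1 // sc_minE.
  have [->|yx] := eqVneq y x.
    have [q qL xq] := lcD_cov lc xt.
    have k0 := cov_gt0 (blocks_f qL) xq. rewrite /= !inE eqxx orbT add1n eqSS eqn0Ngt k0 /=.
    apply/esym/negbTE; rewrite negb_and; apply/orP; right.
    by apply/exists_inP => -[B BP mB]; move: (nomin B BP (is_min_mem mB)); rewrite mB.
  have yE : y \in top |: [set x] = false by rewrite !inE (negbTE yt) (negbTE yx).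
  rewrite yE add0n; congr (_ && _).
  by rewrite (_ : is_min y _ = false) //; apply/negbTE; apply: contraFN yE; apply: is_min_mem.
- rewrite !inE negb_or; apply/andP; split.
    by apply/negP => /eqP [] /setP /(_ x); rewrite !inE eqxx orbT (negbTE xt).
  apply/negP => tL.
  by move: (lcD_top lc tL); rewrite /= inE eqxx.
Qed.


Definition top_pair L : PT := odflt (set0, 1%g) [pick p in L | top \in p.1].

Definition rem L : {set PT} * (T * bool) :=
  let p := top_pair L in
  let x := (p.2^-1)%g top in
  let E0 := p.1 :\ top in
  ((if (E0 == [set x]) && [exists q in L, (q != p) && (x \in q.1)]
    then L :\ p else (E0, (tperm top x * p.2)%g) |: (L :\ p)),
   (x, is_min x p.1)).

Lemma top_pairE L p : p \in L -> top \in p.1 ->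
  (forall q, q \in L -> top \in q.1 -> q = p) -> top_pair L = p.
Proof.
move=> pL tp H; rewrite /top_pair (@pick_uniq _ _ p) //; first by rewrite pL.
by move=> q /andP [qL tq]; apply: H.
Qed.

Lemma lcD_fix L p : lc_on D L -> p \in L -> p.2 top = top.
Proof.
move=> lc pL; apply: (out_perm (S := p.1)); last exact: lcD_top lc pL.
by case/lc_onP: lc => _ _ _ H3 _; case/andP: (H3 p pL).
Qed.

Lemma rem_ins L x b : lc_on D L -> x != top ->
  (b || (x \notin sc_min_elements (blocks L))) -> rem (ins L x b) = (L, (x, b)).
Proof.
move=> lc xt valid; have [insok _ _] := ins_ok lc xt valid.
move: insok; rewrite /ins.
case: pickP => [p /andP [pL /andP [xp /eqP mxp]] | nop] insok.
  set E := p.1; set c := p.2; set p' := (top |: E, (tperm top x * c)%g).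
  have tE := lcD_top lc pL.
  have p'L : p' \notin L :\ p.
    by apply/negP => /setD1P [_ /(lcD_top lc)]; rewrite setU11.
  have tp : top_pair (p' |: L :\ p) = p'.
    apply: top_pairE; rewrite ?setU11 //.
    by move=> q /setU1P [//|/setD1P [_ qL]] tq; move: (lcD_top lc qL); rewrite tq.
  have cx : (p'.2^-1)%g top = x.
    have h : (tperm top x * c)%g x = top by rewrite permM tpermR (lcD_fix lc pL).
    by apply: (@perm_inj _ (tperm top x * c)%g); rewrite /= permKV h.
  rewrite /rem tp cx /= setU1K // is_min_U1top // mxp.
  have -> : (E == [set x]) && [exists q in p' |: L :\ p, (q != p') && (x \in q.1)] = false.
    apply/negbTE/negP => /andP [/eqP Ex /exists_inP [q /setU1P [->|/setD1P [qp qL]]]];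
      first by rewrite eqxx.
    case/andP => _ xq.
    case/lc_onP: lc => _ _ H2 _ H4.
    have qE : q.1 != E by apply: contra qp => /eqP e; apply/eqP; apply: H4.
    have ne : E != q.1 by rewrite eq_sym.
    have mE : is_min x E.
      by rewrite Ex; apply/is_minP; split; rewrite ?inE // => j /set1P ->.
    have := nd_card (H2 _ _ (blocks_f pL) (blocks_f qL) ne) xp xq mE.
    by rewrite -/E Ex cards1 ltnn.
  rewrite setU1K // mulgA tperm2 mul1g /E /c -surjective_pairing setD1K //.
have bT : b.
  case: b valid nop {insok} => //= xsc nop.
  have [q qL xq] := lcD_cov lc xt.
  move: xsc; rewrite sc_minE negb_and; case/orP; last first.
    move/negP; case; apply/exists_inP; exists q.1; first exact: blocks_f.
    by move: (nop q) => /=; rewrite qL xq /=; case: (is_min x q.1).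
  rewrite neq_ltn ltnNge (cov_gt0 (blocks_f qL) xq) /=.
  case/card_gt1P => E1 [E2 []]; rewrite !inE => /andP [/blocksP [q1 q1L ->] x1]
     /andP [/blocksP [q2 q2L ->] x2] ne.
  case/lc_onP: lc => _ _ H2 _ _.
  have := nd_min (H2 _ _ (blocks_f q1L) (blocks_f q2L) ne) x1 x2.
  move: (nop q1) (nop q2) => /=; rewrite q1L q2L x1 x2 /=.
  by case: (is_min x q1.1); case: (is_min x q2.1).
rewrite {}bT.
set p' := (top |: [set x], tperm top x).
have p'L : p' \notin L.
  by apply/negP => /(lcD_top lc); rewrite setU11.
have tp : top_pair (p' |: L) = p'.
  apply: top_pairE; rewrite ?setU11 //.
  by move=> q /setU1P [//|qL] tq; move: (lcD_top lc qL); rewrite tq.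
rewrite /rem tp /= tpermV tpermL setU1K ?inE 1?eq_sym // eqxx /=.
have -> : [exists q in p' |: L, (q != p') && (x \in q.1)].
  have [q qL xq] := lcD_cov lc xt.
  apply/exists_inP; exists q; first by rewrite setU1r.
  by rewrite xq andbT; apply: contraNneq p'L => <-.
rewrite setU1K // is_min_U1top //.
by congr (_, (_, _)); apply/is_minP; split; rewrite ?inE // => j /set1P ->.
Qed.


Lemma nd_deltop E F : top \notin F -> nearly_disjoint E F ->
  (forall i, i \in E -> i \in F -> is_min i E -> 1 < #|E :\ top|) ->
  nearly_disjoint (E :\ top) F.
Proof.
move=> tF /ndP H side; apply/ndP => i /setD1P [it iE] iF.
rewrite is_min_D1top //.
case/orP: (H i iE iF) => /andP [/andP [a b] c]; apply/orP; [left|right].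
  by rewrite a c (side i iE iF a).
by rewrite a b c.
Qed.

Lemma rem_ok L : lc_on [set: T] L -> ([set top], 1%g) \notin L ->
  [/\ lc_on D (rem L).1,
      sc_min_elements (blocks (rem L).1) = sc_min_elements (blocks L),
      (rem L).2.1 != top,
      ((rem L).2.2 || ((rem L).2.1 \notin sc_min_elements (blocks (rem L).1))) &
      ins (rem L).1 (rem L).2.1 (rem L).2.2 = L].
Proof.
move=> lc t1L.
have lc' := lc; case/lc_onP: lc' => H0 H1 H2 H3 H4.
have [p0 p0L tp0] : exists2 p0, p0 \in L & top \in p0.1.
  have : top \in cover (blocks L) by rewrite H1 inE.
  by case/coverP => B /blocksP [p pL ->] tp; exists p.
have uniq_top : forall q, q \in L -> top \in q.1 -> q = p0.
  move=> q qL tq; apply: H4 => //; apply/eqP/negPn/negP => ne.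
  case/orP: (ndP _ _ (H2 _ _ (blocks_f qL) (blocks_f p0L) ne) top tq tp0)
    => /andP [/andP [a b] _]; exact: (min_card_top a b).
have tp : top_pair L = p0 by apply: top_pairE.
set E := p0.1; set c := p0.2.
have cE : cycB E c by apply: H3.
have pc : perm_on E c by case/andP: cE.
have E1 : 1 < #|E|.
  rewrite ltnNge; apply/negP => le1.
  have c1 : c = 1%g by apply: perm_on_id pc le1.
  have Et : E = [set top].
    by apply/esym/eqP; rewrite eqEcard sub1set tp0 cards1 le1.
  by move/negP: t1L; apply; rewrite -Et -c1 /E /c -surjective_pairing.
set x := (c^-1)%g top.
have cx : c x = top by rewrite /x permKV.
have xE : x \in E by rewrite -(perm_closed _ pc) cx.
have xt : x != top.
  apply/eqP => e.
  have ct : c top = top by rewrite -{1}e cx.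
  move: (cycB_orbit cE tp0); rewrite porbit_fix // => Et.
  by move: E1; rewrite -Et cards1.
set E0 := E :\ top.
have xE0 : x \in E0 by rewrite !inE xt.
have E0n : E0 != set0 by apply/set0Pn; exists x.
set P' := blocks L :\ E.
have bD : blocks (L :\ p0) = P' by apply: lc_blocksD1 lc p0L.
have EnP : E \notin P' by rewrite !inE eqxx.
have EP : E \in blocks L by apply: blocks_f.
have tC : top \notin cover P'.
  apply/negP => /coverP [B /setD1P [BE /blocksP [q qL eB]] tB].
  by move: BE; rewrite eB (uniq_top q qL) ?eqxx // -eB.
have lc1 : lc_on (cover P') (L :\ p0) := lc_on_D1 lc p0L.
have other : forall B, B \in P' -> x \in B -> is_min x B = ~~ is_min x E.
  move=> B /setD1P [BE BP] xB.
  by apply: nd_min xE xB; apply: H2; rewrite // eq_sym.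
have remE : rem L = ((if (E0 == [set x]) && [exists q in L, (q != p0) && (x \in q.1)]
    then L :\ p0 else (E0, (tperm top x * c)%g) |: (L :\ p0)), (x, is_min x E)).
  by rewrite /rem tp.
rewrite remE /=.
case: ifP => [/andP [/eqP E0x /exists_inP [q qL /andP [qp xq]]] | cond].
  have qP' : q.1 \in P'.
    rewrite !inE (blocks_f qL) andbT.
    by apply: contra qp => /eqP e; apply/eqP; apply: H4.
  have mxE : is_min x E.
    rewrite -is_min_D1top // -/E0 E0x.
    by apply/is_minP; split; rewrite ?inE // => j /set1P ->.
  have EE : E = top |: [set x] by rewrite -E0x setD1K.
  split => //.
  - rewrite (_ : D = cover P') //; apply/setP => y; rewrite !inE.
    apply/idP/idP => [yt|/coverP [B BP yB]]; last first.
      by apply: contraNneq tC => <-; apply/coverP; exists B.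
    have : y \in cover (blocks L) by rewrite H1.
    case/coverP => B BL yB.
    have [BE|BE] := eqVneq B E.
      move: yB; rewrite BE EE => /setU1P [/eqP|/set1P ->]; first by rewrite (negbTE yt).
      by apply/coverP; exists q.1.
    by apply/coverP; exists B => //; rewrite !inE BE.
  - rewrite bD -[in RHS](setD1K EP) -/P'; apply/setP => y.
    have [->|yt] := eqVneq y top.
      by rewrite (negbTE (top_sc_min tC)) (negbTE (top_sc_min_U1 tC EnP xE xt)).
    rewrite sc_min_U1 // sc_minE.
    have [->|yx] := eqVneq y x.
      rewrite xE add1n eqSS eqn0Ngt (cov_gt0 qP' xq) /=.
      apply/negbTE; rewrite negb_and; apply/orP; right.
      apply/exists_inP => -[B BP mB].
      by move: (other B BP (is_min_mem mB)); rewrite mB mxE.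
    have yE : (y \in E) = false by rewrite EE !inE (negbTE yt) (negbTE yx).
    rewrite yE add0n (_ : is_min y E = false) //.
    by apply/negbTE; apply: contraFN yE; apply: is_min_mem.
  - by rewrite mxE.
  - rewrite /ins; case: pickP => [p /andP [/setD1P [pp pL] /andP [xp /eqP mp]]|_].
      have pP' : p.1 \in P'.
        rewrite !inE (blocks_f pL) andbT.
        by apply: contra pp => /eqP e; apply/eqP; apply: H4.
      by move: (other _ pP' xp); rewrite mp mxE.
    have -> : (top |: [set x], tperm top x) = p0; last by rewrite setD1K.
    rewrite [p0]surjective_pairing -/E -/c -EE; congr (_, _).
    have ctop : c top = x.
      have : c top \in E by rewrite (perm_closed _ pc).
      rewrite EE => /setU1P [ct|/set1P //].
      move: (cycB_orbit cE tp0); rewrite porbit_fix // => Et.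
      by move: E1; rewrite -Et cards1.
    apply/permP => z.
    have [->|zt] := eqVneq z top; first by rewrite tpermL.
    have [->|zx] := eqVneq z x; first by rewrite tpermR.
    rewrite tpermD 1?eq_sym //; apply/esym; apply: (out_perm pc).
    by rewrite EE !inE negb_or zt zx.
have side : forall F, F \in P' -> x \in F -> E0 == [set x] -> False.
  move=> F /setD1P [FE /blocksP [q qL eF]] xF E0x.
  move: cond; rewrite E0x /=; move/negbT/negP; apply; apply/exists_inP; exists q => //.
  rewrite -eF xF andbT; apply: contra FE => /eqP e; by rewrite eF e.
have E0P : E0 \notin P'.
  apply/negP => E0P.
  have [a ma] := ex_min E0n.
  have aE0 := is_min_mem ma.
  have at' : a != top by case/setD1P: aE0.
  move: (ma); rewrite is_min_D1top // => maE.
  case/setD1P: (E0P) => E0E E0L.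
  have aE : a \in E by case/setD1P: aE0.
  have ne : E != E0 by rewrite eq_sym.
  by have := nd_min (H2 _ _ EP E0L ne) aE aE0; rewrite ma maE.
set c0 := (tperm top x * c)%g.
have cE0 : cycB E0 c0 by exact: cycB_rem.
have ndE0 : forall F, F \in blocks (L :\ p0) -> nearly_disjoint (E0, c0).1 F.
  move=> F; rewrite bD => FP; case/setD1P: (FP) => FE FL.
  have tF : top \notin F by apply: contra tC => tF; apply/coverP; exists F.
  apply: nd_deltop => //; first by apply: H2; rewrite // eq_sym.
  move=> i iE iF _; rewrite ltnNge; apply/negP => le1.
  have E0x : E0 = [set x].
    by apply/esym/eqP; rewrite eqEcard sub1set xE0 cards1 le1.
  have it : i != top by apply: contraNneq tF => <-.
  have : i \in E0 by rewrite !inE it.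
  rewrite E0x => /set1P ix; subst i.
  by apply: (side F FP iF); rewrite E0x.
have E0nP : (E0, c0).1 \notin blocks (L :\ p0) by rewrite bD.
have lc2 := lc_on_U1 lc1 E0nP E0n cE0 ndE0.
have cov2 : E0 :|: cover P' = D.
  apply/setP => y; rewrite !inE.
  have [->|yt] := eqVneq y top; first by rewrite (negbTE tC).
  rewrite /=; have : y \in cover (blocks L) by rewrite H1.
  case/coverP => B BL yB.
  have [BE|BE] := eqVneq B E; first by move: yB; rewrite BE => ->.
  by rewrite orbC; apply/orP; left; apply/coverP; exists B => //; rewrite !inE BE.
have blk2 : blocks ((E0, c0) |: L :\ p0) = E0 |: P' by rewrite blocksU1 bD.
split => //.
- by rewrite -cov2.
- rewrite blk2 -[in RHS](setD1K EP) -/P'; apply/setP => y.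
  have [->|yt] := eqVneq y top.
    rewrite (negbTE (top_sc_min_U1 tC EnP xE xt)) (negbTE (top_sc_min _)) //.
    by rewrite cover_U1 cov2 !inE eqxx.
  apply: sc_min_swap => //; first by rewrite !inE yt.
  by rewrite is_min_D1top.
- case mxE: (is_min x E) => //=.
  rewrite blk2 sc_min_U1 // xE0 is_min_D1top // mxE /=.
  case: exists_inP => [[B BP mB]|]; rewrite ?andbF //.
  by rewrite add1n eqSS eqn0Ngt (cov_gt0 BP (is_min_mem mB)).
- have pk : [pick p in (E0, c0) |: L :\ p0 | (x \in p.1) && (is_min x p.1 == is_min x E)]
      = Some (E0, c0).
    apply: pick_uniq; first by rewrite setU11 /= xE0 is_min_D1top // eqxx.
    move=> q /andP [/setU1P [//|/setD1P [qp qL]] /andP [xq /eqP mq]].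
    have qP' : q.1 \in P' by rewrite -bD; apply: blocks_f; rewrite !inE qp qL.
    by move: (other _ qP' xq); rewrite mq; case: (is_min x E).
  rewrite /ins pk.
  rewrite /= setD1K // mulgA tperm2 mul1g setU1K; last first.
    by apply/negP => /blocks_f; rewrite bD; apply/negP.
  by rewrite /E /c -surjective_pairing setD1K.
Qed.

Definition Lset (D' : {set T}) m :=
  [set L : {set PT} | lc_on D' L && (#|sc_min_elements (blocks L)| == m)].
Definition t1 : PT := ([set top], 1%g).
Definition Aset m := [set L in Lset [set: T] m | t1 \in L].
Definition Bset m := [set L in Lset [set: T] m | t1 \notin L].
Definition XB L := [set xb : T * bool |
  (xb.1 != top) && (xb.2 || (xb.1 \notin sc_min_elements (blocks L)))].
Definition Dom m := [set d : {set PT} * (T * bool) |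
  (d.1 \in Lset D m) && (d.2 \in XB d.1)].

Lemma card_Lset m : #|Lset [set: T] m| = #|Aset m| + #|Bset m|.
Proof.
rewrite -(cardsID [set L : {set PT} | t1 \in L] (Lset [set: T] m)).
by congr (_ + _); apply: eq_card => L; rewrite !inE // andbC.
Qed.

Lemma card_Bset m : #|Bset m| = #|Dom m|.
Proof.
pose g (d : {set PT} * (T * bool)) := ins d.1 d.2.1 d.2.2.
have -> : Bset m = g @: Dom m.
  apply/setP => L; apply/idP/imsetP.
    rewrite !inE => /andP [/andP [lc /eqP cm] t1L].
    have [h1 h2 h3 h4 h5] := rem_ok lc t1L.
    exists (rem L); last by rewrite /g h5.
    rewrite inE; apply/andP; split; first by rewrite inE h1 h2 cm eqxx.
    by rewrite inE h3 h4.
  move=> [d dD ->]; move: dD; rewrite inE => /andP [H1 H2].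
  move: H1; rewrite inE => /andP [lc /eqP cm].
  move: H2; rewrite inE => /andP [xt v].
  have [h1 h2 h3] := ins_ok lc xt v.
  by rewrite /g !inE h1 h2 cm eqxx /t1 h3.
apply: card_in_imset => d1 d2; rewrite [d1 \in _]inE [d2 \in _]inE.
move=> /andP [H1 H2] /andP [H3 H4] e.
move: H1 H2 H3 H4; rewrite [d1.1 \in _]inE [d2.1 \in _]inE [d1.2 \in _]inE [d2.2 \in _]inE.
move=> /andP [lc1 _] /andP [xt1 v1] /andP [lc2 _] /andP [xt2 v2].
have := rem_ins lc1 xt1 v1; rewrite -/(g d1) e /g rem_ins //.
by case: d1 {lc1 xt1 v1 e} => L1 [x1 b1]; case: d2 {lc2 xt2 v2} => L2 [x2 b2] /= [-> -> ->].
Qed.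

Lemma card_XB L m : L \in Lset D m -> #|XB L| = (2 * n - m)%N.
Proof.
rewrite inE => /andP [lc /eqP cm].
set S := sc_min_elements (blocks L).
have SD : S \subset D.
  apply/subsetP => y; rewrite sc_minE => /andP [/eqP c1 _].
  case/lc_onP: lc => _ <- _ _ _.
  have : 0 < #|[set B in blocks L | y \in B]| by rewrite c1.
  by case/card_gt0P => B; rewrite inE => /andP [BP yB]; apply/coverP; exists B.
have -> : XB L = [set (x, true) | x in D] :|: [set (x, false) | x in D :\: S].
  apply/setP => -[x b]; rewrite !inE /=.
  apply/andP/orP => [[xt v]|[/imsetP [y yD [-> ->]]|/imsetP [y yDS [-> ->]]]].
  - case: b v => v; [left|right]; apply/imsetP; exists x => //; rewrite !inE xt //.
    by rewrite andbT; move: v.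
  - by move: yD; rewrite !inE.
  - by move: yDS; rewrite !inE => /andP [-> ->].
rewrite cardsU.
have -> : [set (x, true) | x in D] :&: [set (x, false) | x in D :\: S] = set0.
  apply/setP => -[x b]; rewrite !inE; apply/negbTE/andP.
  by case=> /imsetP [y _ [_ ->]] /imsetP [z _ [_]].
rewrite cards0 subn0 !card_imset; try by move=> a a' [].
rewrite cardsD (setIidPr SD) -/S cm.
have cD : #|D| = n by rewrite cardsC1 card_ord.
have : #|S| <= #|D| by apply: subset_leq_card.
rewrite cD cm => le; lia.
Qed.

Lemma card_Dom m : #|Dom m| = (#|Lset D m| * (2 * n - m))%N.
Proof.
rewrite -sum_nat_const.
rewrite -sum1dep_card.
rewrite -(pair_big_dep (fun L => L \in Lset D m) (fun L xb => xb \in XB L) (fun _ _ => 1%N)).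
apply: eq_bigr => L LD.
by rewrite sum1_card (card_XB LD).
Qed.

Lemma uniq_top_block L p q : lc_on [set: T] L -> p \in L -> q \in L ->
  top \in p.1 -> top \in q.1 -> p = q.
Proof.
case/lc_onP => _ _ H2 _ H4 pL qL tp tq; apply: H4 => //.
apply/eqP/negPn/negP => ne.
case/orP: (ndP _ _ (H2 _ _ (blocks_f pL) (blocks_f qL) ne) top tp tq)
  => /andP [/andP [a b] _]; exact: (min_card_top a b).
Qed.

Lemma A_fwd L : lc_on D L -> [/\ lc_on [set: T] (t1 |: L),
  sc_min_elements (blocks (t1 |: L)) = top |: sc_min_elements (blocks L) &
  t1 \notin L].
Proof.
move=> lc.
have tC : top \notin cover (blocks L) by case/lc_onP: (lc) => _ -> _ _ _; rewrite !inE eqxx.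
have tP : [set top] \notin blocks L.
  by apply: contra tC => tP; apply/coverP; exists [set top]; rewrite ?inE.
split.
- have := lc_on_U1 (p := t1) lc tP; rewrite (_ : t1.1 :|: D = [set: T]); last first.
    by apply/setP => y; rewrite !inE; case: (y == top).
  apply => /=.
  + by apply/set0Pn; exists top; rewrite inE.
  + exact: cycB1.
  + move=> F FP; apply/ndP => i /set1P -> tF.
    by move/negP: tC; case; apply/coverP; exists F.
- apply/setP => y; rewrite blocksU1 sc_min_U1 //= !inE.
  have [->|yt] := eqVneq y top.
    rewrite /= add1n eqSS.
    have -> : [set B in blocks L | top \in B] = set0.
      apply/setP => B; rewrite !inE; apply/negbTE/andP => -[BP tB].
      by move/negP: tC; apply; apply/coverP; exists B.
    rewrite cards0 eqxx /=.
    by apply/orP; left; apply/is_minP; split; rewrite ?inE // => j /set1P ->.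
  rewrite add0n /= /singly_covered.
  by rewrite (_ : is_min y [set top] = false) //; apply/negbTE; apply: contra yt => /is_min_mem /set1P ->.
- by apply/negP => /blocks_f /=; apply/negP.
Qed.

Lemma A_bwd L : lc_on [set: T] L -> t1 \in L -> lc_on D (L :\ t1).
Proof.
move=> lc tL.
have := lc_on_D1 lc tL; rewrite (_ : cover _ = D) //.
have lc' := lc; case/lc_onP: lc' => H0 H1 H2 H3 H4.
apply/setP => y; rewrite !inE; apply/idP/idP => [/coverP [B /setD1P [Bt /blocksP [q qL eB]] yB]|yt].
  apply: contra Bt => /eqP ey; subst y.
  have tq : top \in q.1 by rewrite -eB.
  by rewrite eB (uniq_top_block lc qL tL tq) ?inE.
have : y \in cover (blocks L) by rewrite H1.
case/coverP => B BL yB; apply/coverP; exists B => //.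
by rewrite !inE BL andbT; apply: contraNneq yt => e; move: yB; rewrite e inE.
Qed.

Lemma card_Aset m : 0 < m -> #|Aset m| = #|Lset D m.-1|.
Proof.
move=> m0.
have -> : Aset m = (fun L => t1 |: L) @: Lset D m.-1.
  apply/setP => L; apply/idP/imsetP.
    rewrite !inE => /andP [/andP [lc /eqP cm] tL].
    have lc' := A_bwd lc tL.
    exists (L :\ t1); last by rewrite setD1K.
    have [_ h2 _] := A_fwd lc'.
    have e : L = t1 |: (L :\ t1) by rewrite setD1K.
    move: cm; rewrite {1}e h2 cardsU1.
    rewrite (top_sc_min _); last by case/lc_onP: lc' => _ -> _ _ _; rewrite !inE eqxx.
    by rewrite inE lc' /= add1n => <-.
  move=> [L' L'D ->]; move: L'D; rewrite inE => /andP [lc /eqP cm].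
  have [h1 h2 h3] := A_fwd lc.
  rewrite !inE h1 h2 cardsU1 cm eqxx orTb andbT /=.
  rewrite (top_sc_min _); last by case/lc_onP: lc => _ -> _ _ _; rewrite !inE eqxx.
  by rewrite add1n prednK.
apply: card_in_imset => L1 L2; rewrite !inE => /andP [lc1 _] /andP [lc2 _] e.
have [_ _ n1] := A_fwd lc1; have [_ _ n2] := A_fwd lc2.
by rewrite -(setU1K n1) e setU1K.
Qed.

End Main.


Section Transport.
Variable n : nat.
Local Notation top := (@ord_max n).
Local Notation h := (@lift n.+1 (@ord_max n)).
Local Notation T := 'I_n.+1.

Definition hS (B : {set 'I_n}) : {set T} := h @: B.
Definition hP (c : {perm 'I_n}) : {perm T} := lift_perm top top c.
Definition hpair (p : {set 'I_n} * {perm 'I_n}) := (hS p.1, hP p.2).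
Definition hL (L : {set {set 'I_n} * {perm 'I_n}}) := hpair @: L.

Lemma hle i j : (h i <= h j) = (i <= j).
Proof. by rewrite !lift_max. Qed.

Lemma h_top k : h k != top.
Proof. by rewrite eq_sym neq_lift. Qed.

Lemma inS k B : (h k \in hS B) = (k \in B).
Proof. by rewrite mem_imset //; apply: lift_inj. Qed.

Lemma hS_inj : injective hS.
Proof. by apply: imset_inj; apply: lift_inj. Qed.

Lemma hPE c k : hP c (h k) = h (c k).
Proof. exact: lift_perm_lift. Qed.

Lemma hP_top c : hP c top = top.
Proof. exact: lift_perm_id. Qed.

Lemma hP_inj : injective hP.
Proof.
move=> c1 c2 e; apply/permP => k; apply: (@lift_inj _ top).
by rewrite -!hPE e.
Qed.

Lemma hpair_inj : injective hpair.
Proof.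
move=> [B1 c1] [B2 c2] [/hS_inj -> /hP_inj ->] //.
Qed.

Lemma hS_cases y B : y \in hS B -> exists2 k, k \in B & y = h k.
Proof. by case/imsetP => k kB ->; exists k. Qed.

Lemma top_hS B : top \notin hS B.
Proof. by apply/negP => /hS_cases [k _ /eqP]; rewrite eq_sym (negbTE (h_top k)). Qed.

Lemma is_min_h i B : is_min (h i) (hS B) = is_min i B.
Proof.
apply/is_minP/is_minP => -[iB H]; split; first by rewrite -inS.
- by move=> j jB; rewrite -hle; apply: H; rewrite inS.
- by rewrite inS.
- by move=> j /hS_cases [k kB ->]; rewrite hle; apply: H.
Qed.

Lemma card_hS B : #|hS B| = #|B|.
Proof. by apply: card_imset; apply: lift_inj. Qed.

Lemma nd_h E F : nearly_disjoint (hS E) (hS F) = nearly_disjoint E F.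
Proof.
apply/ndP/ndP => H i.
  by move=> iE iF; move: (H (h i)); rewrite !inS !is_min_h !card_hS; apply.
move=> /hS_cases [k kE ->]; rewrite inS => kF.
by rewrite !is_min_h !card_hS; apply: H.
Qed.

Lemma cover_h (P : {set {set 'I_n}}) : cover (hS @: P) = h @: cover P.
Proof.
apply/setP => y; apply/coverP/imsetP.
  case=> B' /imsetP [B BP ->] /hS_cases [k kB ->].
  by exists k => //; apply/coverP; exists B.
case=> k /coverP [B BP kB] ->; exists (hS B); first exact: imset_f.
by rewrite inS.
Qed.

Lemma hP_iter c i k : ((hP c) ^+ i)%g (h k) = h ((c ^+ i)%g k).
Proof.
elim: i => [|i IH]; first by rewrite !expg0 !perm1.
by rewrite !expgSr !permM IH hPE.
Qed.

Lemma porbit_h c k : porbit (hP c) (h k) = hS (porbit c k).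
Proof.
apply/setP => y; apply/porbitP/idP.
  by case=> i ->; rewrite hP_iter inS; apply: mem_porbit.
by case/hS_cases => j /porbitP [i ->] ->; exists i; rewrite hP_iter.
Qed.

Lemma perm_on_h B c : perm_on (hS B) (hP c) = perm_on B c.
Proof.
apply/subsetP/subsetP => H z.
  by rewrite !inE => nz; rewrite -inS; apply: H; rewrite inE hPE;
     apply: contra nz => /eqP /lift_inj ->.
rewrite inE; case: (unliftP top z) => [k ->|->]; last by rewrite hP_top eqxx.
rewrite hPE inS => nz; apply: H; rewrite inE; apply: contra nz => /eqP ->.
by [].
Qed.

Lemma cycB_h B c : cycB (hS B) (hP c) = cycB B c.
Proof.
rewrite /cycB perm_on_h; congr (_ && _).
apply/forall_inP/forall_inP => H k.
  by move=> kB; move: (H (h k)); rewrite inS porbit_h => /(_ kB) /eqP /hS_inj ->.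
by move=> /hS_cases [j jB ->]; rewrite porbit_h (eqP (H j jB)).
Qed.

Lemma cov_h (P : {set {set 'I_n}}) k : #|[set B' in hS @: P | h k \in B']| = #|[set B in P | k \in B]|.
Proof.
have -> : [set B' in hS @: P | h k \in B'] = hS @: [set B in P | k \in B].
  apply/setP => B'; rewrite inE; apply/andP/imsetP.
    case=> /imsetP [B BP ->]; rewrite inS => kB; exists B => //; by rewrite inE BP.
  by case=> B; rewrite inE => /andP [BP kB] ->; rewrite imset_f // inS.
by apply: card_imset; apply: hS_inj.
Qed.

Lemma sc_min_h (P : {set {set 'I_n}}) : sc_min_elements (hS @: P) = h @: sc_min_elements P.
Proof.
apply/setP => y; case: (unliftP top y) => [k ->|->].
  rewrite mem_imset; last exact: lift_inj.
  rewrite !sc_minE cov_h; congr (_ && _).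
  apply/exists_inP/exists_inP => -[B].
    by case/imsetP => B0 B0P -> m; exists B0 => //; rewrite -is_min_h.
  by move=> BP m; exists (hS B); rewrite ?imset_f ?is_min_h.
have -> : top \in h @: sc_min_elements P = false.
  by apply/negbTE/negP => /imsetP [k _ /eqP]; rewrite eq_sym (negbTE (h_top k)).
apply/negbTE; apply: top_sc_min.
by rewrite cover_h; apply/negP => /imsetP [k _ /eqP]; rewrite eq_sym (negbTE (h_top k)).
Qed.

Lemma blocks_h (L : {set {set 'I_n} * {perm 'I_n}}) : blocks (hL L) = hS @: blocks L.
Proof. by rewrite /blocks /hL -!imset_comp. Qed.

Lemma hD : h @: [set: 'I_n] = D n.
Proof.
apply/setP => y; rewrite !inE; case: (unliftP top y) => [k ->|->].
  by rewrite mem_imset ?inE ?h_top //; apply: lift_inj.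
by rewrite eqxx; apply/negbTE/negP => /imsetP [k _ /eqP]; rewrite eq_sym (negbTE (h_top k)).
Qed.

Lemma lc_h (L : {set {set 'I_n} * {perm 'I_n}}) : lc_on (D n) (hL L) = linked_cycle L.
Proof.
rewrite lc_onT; apply/lc_onP/lc_onP; rewrite blocks_h.
  case=> H0 H1 H2 H3 H4; split.
  - by apply: contra H0 => e; rewrite -(imset0 h) imset_f.
  - by apply: (imset_inj (@lift_inj _ top)); rewrite -cover_h H1 hD.
  - move=> E F EP FP EF; rewrite -nd_h; apply: H2; rewrite ?imset_f //.
    by apply: contra EF => /eqP /hS_inj ->.
  - by move=> p pL; rewrite -cycB_h; apply: (H3 (hpair p)); apply: imset_f.
  - move=> p q pL qL e; apply: hpair_inj; apply: H4; rewrite ?imset_f //.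
    by rewrite /= e.
case=> H0 H1 H2 H3 H4; split.
- by apply/negP => /imsetP [B BP /esym]; rewrite -(imset0 h) => /hS_inj e;
     move: H0; rewrite -e BP.
- by rewrite cover_h H1 hD.
- move=> E' F' /imsetP [E EP ->] /imsetP [F FP ->] ne; rewrite nd_h.
  by apply: H2 => //; apply: contra ne => /eqP ->.
- by move=> p' /imsetP [p pL ->]; rewrite /= cycB_h; apply: H3.
- move=> p' q' /imsetP [p pL ->] /imsetP [q qL ->] /= /hS_inj e.
  by rewrite (H4 p q).
Qed.

Lemma perm_down (s : {perm T}) : s top = top -> exists c, s = hP c.
Proof.
move=> st.
have ne : forall k, s (h k) != top.
  move=> k; apply/eqP => e; have := perm_inj (etrans e (esym st)).
  by move/eqP; rewrite (negbTE (h_top k)).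
pose g k := odflt k (unlift top (s (h k))).
have hg : forall k, h (g k) = s (h k).
  move=> k; rewrite /g; case: (unliftP top (s (h k))) => [j ->|e] //.
  by move: (ne k); rewrite e eqxx.
have gi : injective g.
  by move=> k1 k2 e; apply: (@lift_inj _ top); apply: (@perm_inj _ s); rewrite -!hg e.
exists (perm gi); apply/permP => z; case: (unliftP top z) => [k ->|->].
  by rewrite hPE permE hg.
by rewrite hP_top st.
Qed.

Lemma surj_h (L2 : {set {set T} * {perm T}}) : lc_on (D n) L2 -> L2 = hL [set p | hpair p \in L2].
Proof.
move=> lc; apply/setP => q; apply/idP/imsetP => [qL|[p]]; last by rewrite inE => ? ->.
have tq := lcD_top lc qL.
have fix_top : q.2 top = top by exact: lcD_fix lc qL.
have [c ec] := perm_down fix_top.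
have [B eB] : exists B, q.1 = hS B.
  exists (h @^-1: q.1); apply/setP => y; case: (unliftP top y) => [k ->|->].
    by rewrite inS inE.
  by rewrite (negbTE tq) (negbTE (top_hS _)).
exists (B, c); last by rewrite [q]surjective_pairing /hpair /= -eB -ec.
by rewrite inE /hpair /= -eB -ec -surjective_pairing.
Qed.

Lemma f_transport m : f n m = #|Lset (D n) m|.
Proof.
have -> : Lset (D n) m = hL @: [set L | linked_cycle L &&
           (#|sc_min_elements (blocks L)| == m)].
  apply/setP => L2; apply/idP/imsetP.
    rewrite inE => /andP [lc cm]; exists [set p | hpair p \in L2]; last exact: surj_h.
    by rewrite inE -lc_h -surj_h // lc /= -(card_imset _ (@lift_inj _ top)) -sc_min_h
       -blocks_h -surj_h.
  case=> L; rewrite inE => /andP [lc cm] ->.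
  by rewrite inE lc_h lc blocks_h sc_min_h card_imset //; apply: lift_inj.
by rewrite card_imset //; apply: imset_inj; apply: hpair_inj.
Qed.

End Transport.


Lemma rec_nat k m : 0 < m -> f k.+1 m = (f k m.-1 + f k m * (2 * k - m))%N.
Proof.
move=> m0.
have -> : f k.+1 m = #|Lset [set: 'I_k.+1] m|.
  by rewrite /f; apply: eq_card => L; rewrite !inE.
by rewrite card_Lset card_Aset // card_Bset card_Dom -!f_transport.
Qed.

Lemma f_big n m : n < m -> f n m = 0.
Proof.
move=> nm; rewrite /f; apply/eqP; rewrite cards_eq0; apply/eqP/setP => L.
rewrite !inE; apply/negbTE; rewrite negb_and; apply/orP; right.
have : #|sc_min_elements (blocks L)| <= n by rewrite -[X in _ <= X]card_ord max_card.
by move=> le; apply/eqP => e; move: le; rewrite e leqNgt nm.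
Qed.

Lemma f_zero k : f k.+1 0 = 0.
Proof.
rewrite /f; apply/eqP; rewrite cards_eq0; apply/eqP/setP => L.
rewrite !inE lc_onT; apply/negbTE/andP => -[lc /eqP c0].
have : (ord0 : 'I_k.+1) \in sc_min_elements (blocks L).
  have lc' := lc; case/lc_onP: lc' => H0 H1 H2 H3 H4.
  have : (ord0 : 'I_k.+1) \in cover (blocks L) by rewrite H1 inE.
  case/coverP => B BP oB.
  have mB : forall B' : {set 'I_k.+1}, ord0 \in B' -> is_min ord0 B'.
    by move=> B' oB'; apply/is_minP; split.
  rewrite sc_minE; apply/andP; split; last by apply/exists_inP; exists B => //; apply: mB.
  rewrite eqn_leq (cov_gt0 BP oB) andbT leqNgt; apply/negP.
  case/card_gt1P => E1 [E2 []]; rewrite !inE => /andP [E1P o1] /andP [E2P o2] ne.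
  by have := nd_min (H2 _ _ E1P E2P ne) o1 o2; rewrite !mB.
move=> oS; move/eqP: c0; rewrite cards_eq0 => /eqP e.
by rewrite e inE in oS.
Qed.

Lemma f00 : f 0 0 = 1.
Proof.
rewrite /f (_ : [set L | _] = [set set0]) ?cards1 //.
apply/setP => L; rewrite !inE; apply/andP/eqP => [[lc _]|->].
  apply/setP => p; rewrite inE; apply/negbTE/negP => pL.
  case/lc_onP: lc => H0 _ _ _ _.
  have e : p.1 = set0 by apply/setP => -[i lt].
  by move: H0; rewrite -e (blocks_f pL).
have b0 : blocks (set0 : {set {set 'I_0} * {perm 'I_0}}) = set0 by rewrite /blocks imset0.
split.
  apply/lc_onP; rewrite b0; split.
  - by rewrite inE.
  - by apply/setP => -[i lt].
  - by move=> E F; rewrite inE.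
  - by move=> p; rewrite inE.
  - by move=> p q; rewrite inE.
by rewrite cards_eq0; apply/eqP/setP => -[i lt].
Qed.

Import GRing.Theory Num.Theory.
Local Open Scope ring_scope.

Theorem proposition4p5 :
  [/\ f 1 1 = 1%N,
      (forall n : nat, (1 <= n)%N -> f n 0 = 0%N),
      (forall n m : nat, (n < m)%N -> f n m = 0%N) &
      (forall n m : nat, (2 <= n)%N -> (1 <= m)%N ->
         (f n m)%:Z = ((2 * (n - 1))%N%:Z - m%:Z) * (f (n - 1) m)%:Z
                      + (f (n - 1) (m - 1))%:Z)].
Proof.
split.
- by rewrite (@rec_nat 0 1) // (_ : 1.-1 = 0)%N // f00 (_ : (2 * 0 - 1 = 0)%N) // muln0.
- by case=> [//|k] _; apply: f_zero.
- exact: f_big.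
- case=> [//|k] m n2 m1.
  rewrite subn1 /= (rec_nat k m1) subn1.
  have [le|gt] := leqP m (2 * k).
    rewrite PoszD PoszM subzn // addrC; lia.
  rewrite (f_big (n := k) (m := m)); last by lia.
  by rewrite mul0n mulr0 addn0 add0r.
Qed.
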